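(* Fix $b\in\mathbb{N}$ with $b\ge2$. Then, as $x\to\infty$, \[ \sum_{\substack{0<r\le x\\ 0<s\le x^b}}\gcd_b(r,s)=x^{b+1}\frac{\zeta(b)}{\zeta(b+1)}+O(E(x)), \] where the sum is over integers $r,s$, $\zeta$ is the Riemann zeta function, and $E(x)=x^2\log x$ if $b=2$, $E(x)=x^b$ if $b>2$.
   Context: For $b\in\mathbb{N}$ and $r,s\in\mathbb{N}$, $\gcd_b(r,s)=\max\{k\in\mathbb{N} : k\mid r \text{ and } k^b\mid s\}$. *)

(* Defs.v *)
From HB Require Import structures.
From mathcomp Require Import all_boot all_order all_algebra.
From mathcomp Require Import all_classical all_reals all_analysis.
Set Implicit Arguments. Unset Strict Implicit. Unset Printing Implicit Defensive.
Import Order.TTheory GRing.Theory Num.Theory.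
Local Open Scope ring_scope.

(* gcd_b(r,s) = max { k in N : k | r and k^b | s }, for r > 0
   (every such k satisfies k <= r, so the max over k <= r is exact). *)
Definition gcdb (b r s : nat) : nat :=
  (\max_(k < r.+1 | (k %| r) && (k ^ b %| s)) k)%N.

Definition zeta (R : realType) (s : nat) : R :=
  limn (fun n : nat => \sum_(1 <= k < n) ((k%:R : R) ^+ s)^-1).

Definition Sgcd (R : realType) (b : nat) (x : R) : R :=
  (\sum_(1 <= r < (Num.truncn x).+1)
     \sum_(1 <= s < (Num.truncn (x ^+ b)).+1) gcdb b r s)%N%:R.

Definition Eerr (R : realType) (b : nat) (x : R) : R :=
  if b == 2%N then x ^+ 2 * ln x else x ^+ b.

(* Main.v *)
Require Import Defs.
From HB Require Import structures.
From mathcomp Require Import all_boot all_order all_algebra.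
From mathcomp Require Import all_classical all_reals all_analysis.
From mathcomp Require Import cyclic.
From mathcomp Require Import ring lra.
Import Order.TTheory GRing.Theory Num.Theory.
Import numFieldNormedType.Exports.
Set Implicit Arguments. Unset Strict Implicit.

Lemma gcdX k g b : gcdn (k ^ b) (g ^ b) = gcdn k g ^ b.
Proof.
have [->|kp] := posnP k.
  case: b => [|b]; first by rewrite !expn0 gcdnn.
  by rewrite exp0n // !gcd0n.
set e := gcdn k g.
have ep : 0 < e by rewrite gcdn_gt0 kp.
have [k' Hk] : exists k', k = k' * e by exists (k %/ e); rewrite divnK // dvdn_gcdl.
have [g' Hg] : exists g', g = g' * e by exists (g %/ e); rewrite divnK // dvdn_gcdr.
have cop : coprime k' g'.
  rewrite /coprime; apply/eqP.
  have : e * gcdn k' g' = e * 1 by rewrite [LHS]mulnC muln_gcdl -Hk -Hg muln1.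
  by move/eqP; rewrite eqn_mul2l (negbTE (lt0n_neq0 ep)) /= => /eqP.
rewrite Hk Hg !expnMn -muln_gcdl.
by move: (coprimeXl b (coprimeXr b cop)); rewrite /coprime => /eqP ->; rewrite mul1n.
Qed.

Lemma lcmX k g b : lcmn (k ^ b) (g ^ b) = lcmn k g ^ b.
Proof.
have [->|kp] := posnP k.
  case: b => [|b]; first by rewrite !expn0.
  by rewrite exp0n // !lcm0n exp0n.
have [->|gp] := posnP g.
  case: b => [|b]; first by rewrite !expn0.
  by rewrite exp0n // !lcmn0 exp0n.
have gp' : 0 < gcdn k g ^ b by rewrite expn_gt0 gcdn_gt0 kp.
apply/eqP; rewrite -(eqn_pmul2r gp') -{1}gcdX muln_lcm_gcd -expnMn -muln_lcm_gcd expnMn //.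
Qed.

Lemma gcdb_props b r s : 0 < r ->
  [/\ gcdb b r s %| r, gcdb b r s ^ b %| s, 0 < gcdb b r s &
     forall k, (k %| r) && (k ^ b %| s) = (k %| gcdb b r s)].
Proof.
move=> rp.
set P := fun k : 'I_r.+1 => (k %| r) && (k ^ b %| s).
have P1 : P (Ordinal (rp : 1 < r.+1)) by rewrite /P /= dvd1n exp1n dvd1n.
have := bigop.bigmax_eq_arg (Ordinal (rp : 1 < r.+1)) (F := fun k : 'I_r.+1 => (k : nat)) P1.

case: arg_maxnP => // i Pi maxi E0; clear P1.
have -> : gcdb b r s = i by exact: E0.
have ip : 0 < i.
  rewrite lt0n; apply/negP => /eqP i0; move: Pi; rewrite /P i0 /= dvd0n => /andP[/eqP r0 _].
  by rewrite r0 ltnn in rp.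
move: (Pi); rewrite /P => /andP[ir is_].
split => // k; apply/idP/idP.
  move=> /andP[kr ks].
  have kp : 0 < k by case: (posnP k) kr => // ->; rewrite dvd0n => /eqP r0; rewrite r0 in rp.
  set l := lcmn k i.
  have lr : l %| r by rewrite dvdn_lcm kr ir.
  have ls : l ^ b %| s by rewrite /l -lcmX dvdn_lcm ks is_.
  have lle : l < r.+1 by rewrite ltnS dvdn_leq.
  have := maxi (Ordinal lle); rewrite /P /= lr ls => /(_ isT) li.
  have il : i <= l by rewrite dvdn_leq ?lcmn_gt0 ?kp ?ip // dvdn_lcmr.
  have -> : (i : nat) = l by apply/eqP; rewrite eqn_leq li il.
  exact: dvdn_lcml.
move=> ki; rewrite (dvdn_trans ki ir) /=.
exact: dvdn_trans (dvdn_exp2r b ki) is_.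
Qed.

Lemma gcdb_sum b r s n : 0 < r -> r <= n ->
  gcdb b r s = \sum_(0 <= d < n.+1 | (d %| r) && (d ^ b %| s)) totient d.
Proof.
move=> rp rn; have [gr gs gp H] := gcdb_props b s rp.
set g := gcdb b r s.
rewrite (eq_bigl (fun d => d %| g)) ?big_mkord; last by move=> d; rewrite H.
rewrite -{1}(sum_totient_dvd g).
rewrite (@big_ord_widen_cond _ _ _ g.+1 n.+1 (fun d => d %| g) totient); last first.
  by rewrite ltnS (leq_trans (dvdn_leq rp gr) rn).
apply: eq_bigl => d; case dg: (d %| g) => //=.
by rewrite ltnS dvdn_leq.
Qed.

Lemma count_mult d X : \sum_(1 <= r < X.+1) (d %| r : nat) = X %/ d.
Proof.
elim: X => [|X IH]; first by rewrite big_geq // div0n.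
rewrite big_nat_recr //= IH.
have [->|dp] := posnP d; first by rewrite !divn0 dvd0n.
by rewrite divnS // addnC.
Qed.

Lemma Snat b X Y :
  \sum_(1 <= r < X.+1) \sum_(1 <= s < Y.+1) gcdb b r s =
  \sum_(0 <= d < X.+1) totient d * (X %/ d) * (Y %/ d ^ b).
Proof.
rewrite (eq_big_nat _ _ (F2 := fun r => \sum_(1 <= s < Y.+1)
   \sum_(0 <= d < X.+1) (totient d * (d %| r) * (d ^ b %| s)))); last first.
  move=> r /andP[r1 rX]; apply: eq_bigr => s _.
  rewrite (gcdb_sum b s r1 (_ : r <= X)) //.
  rewrite big_mkcond /=; apply: eq_bigr => d _.
  by case: (d %| r); case: (d ^ b %| s); rewrite ?muln0 ?muln1.
rewrite exchange_big_nat /=.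
under eq_bigr => r _ do rewrite exchange_big_nat /=.
rewrite exchange_big_nat /=; apply: eq_bigr => d _.
under eq_bigr => s _ do rewrite -big_distrl /=.
by rewrite -big_distrr /= -big_distrr /= -!count_mult.
Qed.
Local Open Scope ring_scope.

Section R.
Variable R : realType.

Lemma quot_bounds (w : R) (d : nat) : 0 <= w -> (0 < d)%N ->
  ((Num.truncn w %/ d)%N%:R <= w / d%:R) /\ (w / d%:R - 1 <= (Num.truncn w %/ d)%N%:R).
Proof.
move=> w0 dp; have /andP[h1 h2] := truncn_itv w0.
set W := Num.truncn w in h1 h2 *; set q := (W %/ d)%N.
have dR : 0 < d%:R :> R by rewrite ltr0n.
have e1 : ((q * d)%N%:R : R) <= W%:R by rewrite ler_nat leq_trunc_div.
have e2 : (W.+1 <= (q.+1 * d))%N by rewrite ltn_ceil.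
have e2' : (W.+1%:R : R) <= (q.+1 * d)%N%:R by rewrite ler_nat.
rewrite !natrM in e1 e2'. rewrite -natr1 in e2'.
split.
  by rewrite ler_pdivlMr //; lra.
rewrite lerBlDr ler_pdivrMr //; rewrite -natr1 in h2 *; nra.
Qed.

End R.

Section R2.
Variable R : realType.

Lemma prod_bound (u v q1 q2 : R) : 0 <= q1 -> q1 <= u -> u - 1 <= q1 ->
  0 <= q2 -> q2 <= v -> v - 1 <= q2 -> `|q1 * q2 - u * v| <= u + v.
Proof.
move=> h1 h2 h3 h4 h5 h6.
rewrite ler_norml; apply/andP; split; nra.
Qed.

Lemma mono_sum (F : nat -> R) (P : pred nat) n m : (forall k, 0 <= F k) -> (n <= m)%N ->
  \sum_(1 <= k < n | P k) F k <= \sum_(1 <= k < m | P k) F k.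
Proof.
move=> F0 nm.
case: n nm => [|n] nm; first by rewrite big_geq // sumr_ge0.
rewrite [X in _ <= X](big_cat_nat _ (n := n.+1)) //= lerDl sumr_ge0 //.
Qed.

Lemma mult_sum (g : nat -> R) d M : (0 < d)%N ->
  \sum_(1 <= m < M.+1) g (d * m)%N = \sum_(1 <= n < (d * M)%N.+1 | (d %| n)%N) g n.
Proof.
move=> dp; elim: M => [|M IH]; first by rewrite muln0 !big_geq.
rewrite big_nat_recr //= IH [RHS](big_cat_nat _ (n := (d * M).+1)) //=; last first.
  by rewrite ltnS leq_mul2l leqnSn orbT.
congr (_ + _).
rewrite big_mkcond big_nat_recr /=; last by rewrite mulnS addnC -addn1 leq_add2l.
rewrite dvdn_mulr // big1_seq ?add0r // => n /andP[_]; rewrite mem_index_iota => /andP[h1 h2].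
case: ifP => // hd; exfalso; move: hd h1 h2 => /dvdnP[q ->].
move=> h1 h2.
have e1 : (M < q)%N by rewrite -(ltn_pmul2r dp) mulnC.
have e2 : (q < M.+1)%N by rewrite -(ltn_pmul2r dp) [(M.+1 * d)%N]mulnC.
by move: (leq_trans e1 e2); rewrite ltnn.
Qed.

End R2.
Local Open Scope ring_scope.

Lemma totient_le d : (totient d <= d)%N.
Proof.
rewrite totient_count_coprime.
apply: (@leq_trans (\sum_(0 <= i < d) 1)%N).
  by apply: bigop.leq_sum => i _; case: coprime.
by rewrite sum_nat_const_nat subn0 muln1.
Qed.

Lemma sum_tot_div n M : (0 < n)%N -> (n <= M)%N ->
  (\sum_(1 <= d < M.+1 | (d %| n)%N) totient d)%N = n.
Proof.
move=> np nM.
have E0 : (\sum_(0 <= d < n.+1 | (d %| n)%N) totient d)%N = n.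
  by rewrite big_mkord; exact: sum_totient_dvd.
move: E0; rewrite big_ltn_cond // dvd0n (negbTE (lt0n_neq0 np)) => E.
rewrite (big_cat_nat _ (n := n.+1)) //= E big1_seq ?addn0 // => d /andP[dn].
rewrite mem_index_iota => /andP[h1 _].
by move: (dvdn_leq np dn); rewrite leqNgt h1.
Qed.

Section R3.
Variable R : realType.

Lemma gauss_exchange (g : nat -> R) M :
  \sum_(1 <= d < M.+1) (totient d)%:R * \sum_(1 <= n < M.+1 | (d %| n)%N) g n
  = \sum_(1 <= n < M.+1) n%:R * g n.
Proof.
under eq_bigr => d _ do rewrite big_distrr /=.
rewrite (exchange_big_dep_nat predT) //=.
apply: eq_big_nat => n /andP[n1 nM].
by rewrite -mulr_suml -natr_sum sum_tot_div // -ltnS.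
Qed.

End R3.
Local Open Scope ring_scope.

Section R4.
Variable R : realType.

Definition zs (s N : nat) : R := \sum_(1 <= k < N) ((k%:R : R) ^+ s)^-1.
Definition asum (b N : nat) : R :=
  \sum_(1 <= d < N) (totient d)%:R * ((d%:R : R) ^+ b.+1)^-1.

Lemma tel m j : (0 < m)%N ->
  \sum_(m.+1 <= k < (m + j).+1) ((k%:R : R) ^+ 2)^-1 <= m%:R^-1 - (m + j)%:R^-1.
Proof.
move=> mp; elim: j => [|j IH]; first by rewrite addn0 big_geq // subrr.
rewrite addnS big_nat_recr /=; last by rewrite ltnS leq_addr.
set t : R := (m + j)%:R in IH *.
have tp : 0 < t by rewrite /t ltr0n addn_gt0 mp.
have -> : ((m + j).+1%:R : R) = t + 1 by rewrite -natr1.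
clearbody t.
have e : t^-1 - (t + 1)^-1 = (t * (t + 1))^-1.
  have t0 : t != 0 by rewrite gt_eqF.
  have t1 : t + 1 != 0 by rewrite gt_eqF // ltr_wpDr.
  by field; rewrite t0 t1.
have e2 : ((t + 1) ^+ 2)^-1 <= (t * (t + 1))^-1.
  rewrite lef_pV2 ?posrE ?exprn_gt0 ?mulr_gt0 //; [nra|lra|lra].
have : \sum_(m.+1 <= i < (m + j).+1) ((i%:R : R) ^+ 2)^-1 + ((t + 1) ^+ 2)^-1
  <= m%:R^-1 - t^-1 + (t^-1 - (t + 1)^-1) by rewrite e; exact: lerD.
by move=> H; apply: (le_trans H); lra.
Qed.

Lemma sq_le k s : (1 <= k)%N -> (2 <= s)%N -> ((k%:R : R) ^+ s)^-1 <= ((k%:R : R) ^+ 2)^-1.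
Proof.
move=> k1 s2; rewrite lef_pV2 ?posrE ?exprn_gt0 ?ltr0n //.
by rewrite -!natrX ler_nat leq_pexp2l.
Qed.

Lemma zs_le2 s N : (2 <= s)%N -> zs s N <= 2.
Proof.
move=> s2; rewrite /zs.
apply: (le_trans (y := \sum_(1 <= k < N) ((k%:R : R) ^+ 2)^-1)).
  by apply: ler_sum_nat => k /andP[k1 _]; exact: sq_le.
case: N => [|[|n]]; first by rewrite big_geq.
  by rewrite big_geq.
rewrite big_ltn // expr1n invr1.
have := tel n (ltnSn 0); rewrite add1n mulr1n invr1 => H.
have : (0 : R) <= n.+1%:R^-1 by rewrite invr_ge0 ler0n.
move=> h0; apply: (le_trans (lerD (lexx 1) H)). set y := (n.+1%:R^-1) in h0 *. lra.
Qed.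

Lemma zs_nd s : nondecreasing_seq (zs s).
Proof.
move=> n m nm; by apply: (@mono_sum R _ xpredT).
Qed.

Lemma zs_cvg s : (2 <= s)%N -> cvgn (zs s : R ^nat).
Proof.
move=> s2; apply: nondecreasing_is_cvgn; first exact: zs_nd.
by exists 2 => _ [n _ <-]; exact: zs_le2.
Qed.

Lemma zs_le_zeta s n : (2 <= s)%N -> zs s n <= zeta R s.
Proof.
move=> s2; exact: (nondecreasing_cvgn_le (zs_nd s) (zs_cvg s2)).
Qed.

Lemma zeta_ge1 s : (2 <= s)%N -> 1 <= zeta R s.
Proof.
move=> s2; apply: le_trans (zs_le_zeta 2 s2).
by rewrite /zs big_nat1 expr1n invr1.
Qed.

End R4.
Local Open Scope ring_scope.

Section R5.
Variable R : realType.

Lemma nX_inv (n b : nat) : (0 < n)%N ->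
  n%:R * ((n%:R : R) ^+ b.+1)^-1 = ((n%:R : R) ^+ b)^-1.
Proof.
move=> np; have n0 : (n%:R : R) != 0 by rewrite pnatr_eq0 -lt0n.
by rewrite exprS invfM mulrA mulfV // mul1r.
Qed.

Lemma asum_le_zs b N : asum R b N <= zs R b N.
Proof.
apply: ler_sum_nat => d /andP[d1 _].
by rewrite -[X in _ <= X](@nX_inv d b) // ler_pM2r ?invr_gt0 ?exprn_gt0 ?ltr0n // ler_nat totient_le.
Qed.

Lemma asum_nd b : nondecreasing_seq (asum R b).
Proof.
move=> n m nm; apply: (@mono_sum R _ xpredT) => // k.
Qed.

Lemma asum_cvg b : (2 <= b)%N -> cvgn (asum R b : R ^nat).
Proof.
move=> b2; apply: nondecreasing_is_cvgn; first exact: asum_nd.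
by exists 2 => _ [n _ <-]; exact: le_trans (asum_le_zs b n) (zs_le2 R n b2).
Qed.

Definition fb (b n : nat) : R := ((n%:R : R) ^+ b.+1)^-1.

Lemma fb_ge0 b n : 0 <= fb b n.
Proof. by rewrite /fb invr_ge0 exprn_ge0 // ler0n. Qed.

Lemma prod_expand b N :
  asum R b N.+1 * zs R b.+1 N.+1 =
  \sum_(1 <= d < N.+1) (totient d)%:R * \sum_(1 <= n < (d * N)%N.+1 | (d %| n)%N) fb b n.
Proof.
rewrite /asum mulr_suml; apply: eq_big_nat => d /andP[d1 _].
rewrite -mulrA; congr (_ * _).
rewrite -(mult_sum (fb b)) // /zs big_distrr; apply: eq_bigr => m _.
by rewrite /fb natrM exprMn invfM.
Qed.

Lemma zs_gauss b M : zs R b M.+1 = \sum_(1 <= d < M.+1) (totient d)%:R *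
    \sum_(1 <= n < M.+1 | (d %| n)%N) fb b n.
Proof.
rewrite gauss_exchange /zs; apply: eq_big_nat => n /andP[n1 _].
by rewrite /fb nX_inv.
Qed.

Lemma squeeze_low b N : zs R b N.+1 <= asum R b N.+1 * zs R b.+1 N.+1.
Proof.
rewrite prod_expand zs_gauss; apply: ler_sum_nat => d /andP[d1 _].
apply: ler_wpM2l; first by rewrite ler0n.
apply: mono_sum; first exact: fb_ge0.
by rewrite ltnS leq_pmull.
Qed.

Lemma squeeze_up b N : asum R b N.+1 * zs R b.+1 N.+1 <= zs R b (N * N)%N.+1.
Proof.
rewrite prod_expand zs_gauss.
set T := \sum_(1 <= d < N.+1) (totient d)%:R *
    \sum_(1 <= n < (N * N)%N.+1 | (d %| n)%N) fb b n.
apply: (@le_trans _ _ T).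
  apply: ler_sum_nat => d /andP[d1 dN].
  apply: ler_wpM2l; first by rewrite ler0n.
  apply: mono_sum; first exact: fb_ge0.
  by rewrite ltnS leq_mul2r -ltnS dN orbT.
apply: (@mono_sum R (fun d => (totient d)%:R *
    \sum_(1 <= n < (N * N)%N.+1 | (d %| n)%N) fb b n) xpredT).
  by move=> k; rewrite mulr_ge0 ?ler0n // sumr_ge0 // => i _; exact: fb_ge0.
by rewrite ltnS; case: (N) => // n; rewrite leq_pmulr.
Qed.

End R5.
Local Open Scope ring_scope.

Section R6.
Variable R : realType.

Lemma asum_lim b : (2 <= b)%N -> limn (asum R b) * zeta R b.+1 = zeta R b.
Proof.
move=> b2.
have b12 : (2 <= b.+1)%N by apply: leq_trans b2 _.
have ca := @asum_cvg R b b2.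
have cz := @zs_cvg R b.+1 b12.
have cz0 := @zs_cvg R b b2.
have cp : cvgn ((asum R b) \* (zs R b.+1) : R ^nat) by exact: is_cvgM.
have E : limn ((asum R b) \* (zs R b.+1) : R ^nat) = limn (asum R b) * zeta R b.+1.
  by rewrite limM.
rewrite -E; apply/eqP; rewrite eq_le; apply/andP; split.
  apply: limr_le => //; apply: nearW => -[|n] /=.
    by rewrite /asum big_geq // mul0r; apply: le_trans (@zeta_ge1 R b b2).
  apply: le_trans (@squeeze_up R b n) _; exact: zs_le_zeta.
have -> : zeta R b = limn (zs R b) by [].
apply: ler_lim => //; apply: nearW => -[|n] /=.
  by rewrite /asum /zs !big_geq // mul0r.
exact: squeeze_low.
Qed.

Lemma asum_term_le b d : (2 <= b)%N -> (1 <= d)%N ->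
  (totient d)%:R * ((d%:R : R) ^+ b.+1)^-1 <= ((d%:R : R) ^+ 2)^-1.
Proof.
move=> b2 d1; apply: le_trans (@sq_le R d b d1 b2).
by rewrite -[X in _ <= X](@nX_inv R d b) // ler_pM2r ?invr_gt0 ?exprn_gt0 ?ltr0n // ler_nat totient_le.
Qed.

Lemma asum_tail b n m : (2 <= b)%N -> (0 < n)%N ->
  asum R b m <= asum R b n.+1 + n%:R^-1.
Proof.
move=> b2 np.
have inv0 : (0 : R) <= n%:R^-1 by rewrite invr_ge0 ler0n.
have [mn|nm] := leqP m n.+1.
  by apply: le_trans (@asum_nd R b m n.+1 mn) _; rewrite lerDl.
have -> : m = (n + (m - n.+1)).+1 by rewrite -addSn subnKC // ltnW.
move: (m - n.+1)%N => j.
rewrite /asum (big_cat_nat _ (n := n.+1)) //=; last by rewrite ltnS leq_addr.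
rewrite lerD2l.
have T := @tel R n j np.
have T2 : (0 : R) <= (n + j)%:R^-1 by rewrite invr_ge0 ler0n.
apply: (@le_trans _ _ (n%:R^-1 - (n + j)%:R^-1)); last by rewrite lerBlDr lerDl.
apply: le_trans T.
apply: ler_sum_nat => d /andP[d1 _]; apply: asum_term_le => //.
exact: leq_trans d1.
Qed.

Lemma asum_lim_tail b n : (2 <= b)%N -> (0 < n)%N ->
  asum R b n.+1 <= limn (asum R b) <= asum R b n.+1 + n%:R^-1.
Proof.
move=> b2 np; have ca := @asum_cvg R b b2.
apply/andP; split; first exact: nondecreasing_cvgn_le (@asum_nd R b) ca _.
apply: limr_le => //; apply: nearW => m; exact: asum_tail.
Qed.

End R6.
Local Open Scope ring_scope.

Section R7.
Variable R : realType.

Lemma ln_step (t : R) : 0 < t -> (t + 1)^-1 <= ln (t + 1) - ln t.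
Proof.
move=> tp.
have t1p : 0 < t + 1 by lra.
have i1 : (t + 1)^-1 < 1 by rewrite invf_lt1 //; lra.
have h := @le_ln1Dx R (- (t + 1)^-1) (ltac:(lra)).
have e : 1 + - (t + 1)^-1 = t / (t + 1).
  by field; rewrite gt_eqF.
rewrite e ln_div ?posrE // in h.
lra.
Qed.

Lemma harmonic n : zs R 1 n.+2 <= 1 + ln (n.+1%:R : R).
Proof.
elim: n => [|n IH].
  by rewrite /zs big_nat1 ln1 expr1 invr1 addr0.
rewrite /zs big_nat_recr //= -/(zs R 1 n.+2) expr1.
have tp : (0 : R) < n.+1%:R by rewrite ltr0n.
have -> : (n.+2%:R : R) = n.+1%:R + 1 by rewrite -natr1.
have := ln_step tp.
set t := (n.+1%:R : R) in IH tp *.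
lra.
Qed.

End R7.
Local Open Scope ring_scope.

Section R8.
Variable R : realType.

Lemma main_bound (c : nat) (x : R) : (1 <= c)%N -> 1 <= x ->
  `|Sgcd c.+1 x - x ^+ c.+2 * limn (asum R c.+1)| <=
     x ^+ 2 + x ^+ c.+1 * zs R c (Num.truncn x).+1 + 2 * x ^+ c.+1.
Proof.
move=> c1 x1.
have b2 : (2 <= c.+1)%N by [].
have x0 : 0 <= x by lra.
have /andP[hX1 hX2] := truncn_itv x0.
have X1 : (0 < Num.truncn x)%N by rewrite truncn_gt0.
set X := Num.truncn x in hX1 hX2 X1 *.
set Y := Num.truncn (x ^+ c.+1).
have t0 : totient 0 = 0%N by apply/eqP; rewrite -leqn0 leqNgt totient_gt0.
have S_eq : Sgcd c.+1 x = \sum_(1 <= d < X.+1)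
    (totient d)%:R * ((X %/ d)%N%:R * (Y %/ d ^ c.+1)%N%:R).
  rewrite /Sgcd -/X -/Y Snat big_ltn // t0 !mul0n add0n natr_sum.
  by apply: eq_bigr => d _; rewrite !natrM mulrA.
have M_eq : x ^+ c.+2 * asum R c.+1 X.+1 = \sum_(1 <= d < X.+1)
    (totient d)%:R * ((x / d%:R) * (x ^+ c.+1 / d%:R ^+ c.+1)).
  rewrite /asum big_distrr; apply: eq_big_nat => d /andP[d1 _].
  have d0 : (d%:R : R) != 0 by rewrite pnatr_eq0 -lt0n.
  have D0 : (d%:R : R) ^+ c.+1 != 0 by rewrite expf_neq0.
  rewrite /= (exprS x c.+1) (exprS (d%:R : R) c.+1).
  move: D0; set P := x ^+ c.+1; set D := (d%:R : R) ^+ c.+1 => D0.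
  by field; rewrite D0 d0.
have B1 : `|Sgcd c.+1 x - x ^+ c.+2 * asum R c.+1 X.+1| <=
    X%:R * x + x ^+ c.+1 * zs R c X.+1.
  have -> : X%:R * x + x ^+ c.+1 * zs R c X.+1 =
      \sum_(1 <= d < X.+1) (x + x ^+ c.+1 * ((d%:R : R) ^+ c)^-1).
    by rewrite big_split /= sumr_const_nat subn1 /= -big_distrr /= mulr_natl.
  rewrite S_eq M_eq -sumrB.
  apply: le_trans (ler_norm_sum _ _ _) _.
  apply: ler_sum_nat => d /andP[d1 dX].
  have dp : (0 : R) < d%:R by rewrite ltr0n.
  rewrite -mulrBr normrM ger0_norm ?ler0n //.
  have [q1a q1b] := quot_bounds x0 d1.
  have dbp : (0 < d ^ c.+1)%N by rewrite expn_gt0 d1.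
  have [q2a q2b] := quot_bounds (exprn_ge0 c.+1 x0) dbp.
  rewrite -/X in q1a q1b; rewrite -/Y natrX in q2a q2b.
  have hp := prod_bound (ler0n _ _) q1a q1b (ler0n _ _) q2a q2b.
  apply: le_trans (ler_wpM2l (ler0n _ _) hp) _.
  have tle : ((totient d)%:R : R) <= d%:R by rewrite ler_nat totient_le.
  have uv0 : 0 <= x / d%:R + x ^+ c.+1 / d%:R ^+ c.+1.
    by rewrite addr_ge0 // divr_ge0 // ?exprn_ge0 // ler0n.
  apply: le_trans (ler_wpM2r uv0 tle) _.
  rewrite mulrDr mulrCA mulfV ?gt_eqF // mulr1 lerD2l.
  by rewrite mulrCA nX_inv.
have /andP[B2a B2b] := @asum_lim_tail R c.+1 X b2 X1.
have X1R : (1 : R) <= X%:R by rewrite ler1n.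
have B3 : x ^+ c.+2 * X%:R^-1 <= 2 * x ^+ c.+1.
  have xX : x / X%:R <= 2 by rewrite ler_pdivrMr; lra.
  rewrite exprSr -mulrA mulrC; apply: ler_wpM2r => //; exact: exprn_ge0.
have B4 : X%:R * x <= x ^+ 2 by rewrite expr2 ler_wpM2r.
have P0 : 0 <= x ^+ c.+2 by exact: exprn_ge0.
have B5 : x ^+ c.+2 * (limn (asum R c.+1) - asum R c.+1 X.+1) <= x ^+ c.+2 * X%:R^-1.
  by apply: ler_wpM2l => //; lra.
have B6 : 0 <= x ^+ c.+2 * (limn (asum R c.+1) - asum R c.+1 X.+1).
  by apply: mulr_ge0 => //; lra.
have -> : Sgcd c.+1 x - x ^+ c.+2 * limn (asum R c.+1) =
   (Sgcd c.+1 x - x ^+ c.+2 * asum R c.+1 X.+1) -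
   x ^+ c.+2 * (limn (asum R c.+1) - asum R c.+1 X.+1) by ring.
apply: le_trans (ler_normB _ _) _.
rewrite (ger0_norm B6).
move: B1 B3 B4 B5.
set T1 := `|_|; set T2 := x ^+ c.+2 * (_ - _); set T3 := x ^+ c.+2 * _.
set T4 := X%:R * x; set T5 := x ^+ c.+1 * _; set T6 := x ^+ c.+1; set T7 := x ^+ 2.
lra.
Qed.

End R8.
Unset Implicit Arguments.
Unset Strict Implicit.
Theorem mainTheorem3 (R : realType) (b : nat) (hb : (2 <= b)%N) :
  exists (C x0 : R), forall x : R, x0 <= x ->
    `| Sgcd b x - x ^+ b.+1 * (zeta R b / zeta R b.+1) | <= C * Eerr b x.
Proof.
exists 5, (expR 1) => x hx.
have e2 : 2 <= expR (1 : R) by have := expR_ge1Dx (1 : R); lra.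
have x1 : 1 <= x by lra.
have x0 : 0 <= x by lra.
have xp : 0 < x by lra.
have lnx : 1 <= ln x.
  have : ln (expR 1) <= ln x by rewrite ler_ln // posrE expR_gt0.
  by rewrite expRK.
case: b hb => [|c] // hb.
have c1 : (1 <= c)%N by [].
have hA := @asum_lim R c.+1 hb.
have z1 := @zeta_ge1 R c.+2 (leq_trans hb (leqnSn _)).
have -> : zeta R c.+1 / zeta R c.+2 = limn (asum R c.+1).
  by rewrite -hA mulfK // gt_eqF // (lt_le_trans ltr01 z1).
apply: le_trans (main_bound c1 x1) _.
have X1 : (0 < Num.truncn x)%N by rewrite truncn_gt0.
have /andP[hX1 _] := truncn_itv x0.
rewrite /Eerr.
have Q0 : 0 <= x ^+ 2 by exact: exprn_ge0.
case: (c =P 1%N) => [->|cn1] /=.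
  have := X1; case E: (Num.truncn x) => [|n] // _.
  rewrite E in hX1.
  have H1 := @harmonic R n.
  have H2 : ln (n.+1%:R : R) <= ln x by rewrite ler_ln // posrE ltr0n.
  have H3 : 0 <= x ^+ 2 * (ln x - 1) by apply: mulr_ge0 => //; lra.
  have H4 : x ^+ 2 * zs R 1 n.+2 <= x ^+ 2 * (1 + ln x) by apply: ler_wpM2l => //; lra.

  move: H3 H4; set L := ln x; set Z := zs R 1 n.+2; set Q := x ^+ 2.
  move=> H3 H4; nra.
have c2 : (2 <= c)%N by move: c1 cn1; case: (c) => [|[|k]].
have H1 := @zs_le2 R c (Num.truncn x).+1 c2.
have Qp : 0 <= x ^+ c.+1 by exact: exprn_ge0.
have H2 : x ^+ 2 <= x ^+ c.+1 by apply: ler_weXn2l.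
have H3 : x ^+ c.+1 * zs R c (Num.truncn x).+1 <= x ^+ c.+1 * 2 by apply: ler_wpM2l.
move: H2 H3; set Z := zs R c _; set Q := x ^+ c.+1; set Q2 := x ^+ 2.
move=> H2 H3.
have -> : (c.+1 == 2)%N = false by apply/negbTE; rewrite eqSS; apply/eqP.
lra.
Qed.
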